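(* Let $g$ be a balanced $l$-variable Boolean function such that there exists $\bm{\beta}\in\mathbb{F}_2^l$ with $\mathrm{wt}(\bm{\beta})=1$ and $W_g^2(\bm{\beta})=\max_{\mathbf{v}\in\mathbb{F}_2^l}W_g^2(\mathbf{v})$. Define $f_0=g$ and $f_m=g\diamond f_{m-1}$ for $m\ge1$ (so $f_m$ is an $l^{m+1}$-variable Boolean function). Then for all $m\ge0$, $$H_\infty(f_m)=(m+1)\,H_\infty(g)\quad\text{and}\quad \frac{H_\infty(f_m)}{\mathrm{Inf}(f_m)}=\frac{H_\infty(g)}{\mathrm{Inf}(g)}\cdot\frac{m+1}{\mathrm{Inf}(g)^m}.$$
   Context: Boolean functions are maps $\mathbb{F}_2^n\to\mathbb{F}_2$; balanced means taking value $1$ on exactly half the inputs. Walsh transform: $W_f(\bm{\alpha})=2^{-n}\sum_{\mathbf{x}}(-1)^{f(\mathbf{x})\oplus\langle\mathbf{x},\bm{\alpha}\rangle}$. Logarithms are base 2. Min-entropy: $H_\infty(f)=\min_{\bm{\alpha}:W_f^2(\bm{\alpha})\ne0}\log(1/W_f^2(\bm{\alpha}))$. Influence: $\mathrm{Inf}(f)=\sum_{i=1}^n\Pr_{\mathbf{x}\in\mathbb{F}_2^n}[f(\mathbf{x})\ne f(\mathbf{x}\oplus\mathbf{e}_i)]$, where $\mathbf{e}_i$ is the $i$-th unit vector (equivalently $\mathrm{Inf}(f)=\sum_{\bm{\alpha}}\mathrm{wt}(\bm{\alpha})W_f^2(\bm{\alpha})$). Disjoint composition: for $f$ on $k$ variables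 and $h$ on $l$ variables, $(f\diamond h)(\mathbf{x})=f(h(\mathbf{x}^{(1)}),\ldots,h(\mathbf{x}^{(k)}))$ with $\mathbf{x}^{(i)}=(x_{(i-1)l+1},\ldots,x_{il})$. *)

(* Defs.v *)
From HB Require Import structures.
From mathcomp Require Import all_boot all_order all_algebra.
From mathcomp Require Import all_classical all_reals all_analysis.
Set Implicit Arguments. Unset Strict Implicit. Unset Printing Implicit Defensive.
Import Order.TTheory GRing.Theory Num.Theory.
Local Open Scope ring_scope.

Definition bvec (n : nat) := {ffun 'I_n -> bool}.
Definition bfun (n : nat) := bvec n -> bool.

Definition wt n (a : bvec n) : nat := #|[pred i | a i]|.

Definition dotb n (x a : bvec n) : bool := \big[addb/false]_(i < n) (x i && a i).

Definition balanced n (f : bfun n) : Prop := (2 * #|[pred x | f x]| = 2 ^ n)%N.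

Definition walsh (R : realType) n (f : bfun n) (a : bvec n) : R :=
  (2%:R ^- n) * \sum_(x : bvec n) (-1) ^+ (f x (+) dotb x a).

Definition log2 (R : realType) (x : R) : R := ln x / ln 2.

Definition Hinf (R : realType) n (f : bfun n) : R :=
  fine (\big[Order.min/+oo%E]_(a : bvec n | walsh R f a ^+ 2 != 0)
          (log2 (1 / walsh R f a ^+ 2))%:E).

Definition flip n (x : bvec n) (i : 'I_n) : bvec n :=
  [ffun j => if j == i then ~~ x j else x j].

Definition Inf (R : realType) n (f : bfun n) : R :=
  \sum_(i < n) (#|[pred x : bvec n | f x != f (flip x i)]|%:R / (2 ^ n)%:R).

Lemma blk_lt k l (i : 'I_k) (j : 'I_l) : (i * l + j < k * l)%N.
Proof.
case: i j => i Hi [j Hj] /=.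
apply: (@leq_trans (i * l + l)); first by rewrite ltn_add2l.
by rewrite -mulSnr leq_mul2r Hi orbT.
Qed.

Definition blk k l (i : 'I_k) (j : 'I_l) : 'I_(k * l) := Ordinal (blk_lt i j).

(* x^(i) = (x_{(i-1)l+1}, ..., x_{il}) (0-based: block i). *)
Definition block k l (x : bvec (k * l)) (i : 'I_k) : bvec l :=
  [ffun j => x (blk i j)].

Definition dcomp k l (f : bfun k) (h : bfun l) : bfun (k * l) :=
  fun x => f [ffun i => h (block x i)].

Fixpoint nv (l m : nat) : nat := if m is m'.+1 then (l * nv l m')%N else l.

Lemma nvE l m : nv l m = (l ^ m.+1)%N.
Proof. elim: m => [|m IH] /=; first by rewrite expn1. by rewrite IH [in RHS]expnS. Qed.

Fixpoint fiter l (g : bfun l) (m : nat) : bfun (nv l m) :=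
  match m return bfun (nv l m) with
  | 0 => g
  | m'.+1 => @dcomp l (nv l m') g (@fiter l g m')
  end.
Arguments fiter {l} g m.
Arguments dcomp {k l} f h.

(* Main.v *)
Require Import Defs.
From HB Require Import structures.
From mathcomp Require Import all_boot all_order all_algebra.
From mathcomp Require Import all_classical all_reals all_analysis.
From mathcomp Require Import ring lra.
Import Order.TTheory GRing.Theory Num.Theory.
Local Open Scope ring_scope.

Set Implicit Arguments. Unset Strict Implicit. Unset Printing Implicit Defensive.

Lemma unpair_lt1 k l (p : 'I_(k * l)) : (p %/ l < k)%N.
Proof.
case: p => p; case: l => [|l]; first by rewrite muln0.
by move=> H; rewrite /= ltn_divLR.
Qed.
Lemma unpair_lt2 k l (p : 'I_(k * l)) : (p %% l < l)%N.
Proof.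
case: p => p; case: l => [|l]; first by rewrite muln0.
by move=> H; rewrite /= ltn_pmod.
Qed.
Definition unpair k l (p : 'I_(k * l)) : 'I_k * 'I_l :=
  (Ordinal (unpair_lt1 p), Ordinal (unpair_lt2 p)).

Lemma blk_unpair k l (p : 'I_(k * l)) : blk (unpair p).1 (unpair p).2 = p.
Proof. by apply: val_inj; rewrite /= -divn_eq. Qed.

Lemma unpair_blk k l (i : 'I_k) (j : 'I_l) : unpair (blk i j) = (i, j).
Proof.
have jl := ltn_ord j.
have l0 : (0 < l)%N by apply: leq_ltn_trans jl.
congr pair; apply: val_inj => /=.
  by rewrite divnMDl // divn_small // addn0.
by rewrite modnMDl modn_small.
Qed.

Definition unblock k l (X : {ffun 'I_k -> bvec l}) : bvec (k * l) :=
  [ffun p => X (unpair p).1 (unpair p).2].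

Lemma block_unblock k l X i : block (@unblock k l X) i = X i.
Proof. by apply/ffunP => j; rewrite !ffunE unpair_blk. Qed.

Lemma unblock_block k l (x : bvec (k * l)) : unblock [ffun i => block x i] = x.
Proof. by apply/ffunP => p; rewrite !ffunE blk_unpair. Qed.

Lemma unblock_bij k l : bijective (@unblock k l).
Proof.
exists (fun x => [ffun i => block x i]) => [X|x]; last exact: unblock_block.
by apply/ffunP => i; rewrite ffunE block_unblock.
Qed.

Lemma blk_bij k l : bijective (fun q : 'I_k * 'I_l => blk q.1 q.2).
Proof.
exists (@unpair k l) => [[i j]|p]; first by rewrite unpair_blk.
exact: blk_unpair.
Qed.

Section Signs.
Variable R : comNzRingType.

Definition zv n : bvec n := [ffun => false].

Lemma sign_xor I (r : seq I) (P : pred I) (F : I -> bool) :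
  (-1) ^+ (\big[addb/false]_(i <- r | P i) F i) = \prod_(i <- r | P i) ((-1) ^+ F i : R).
Proof.
apply: (big_morph (fun b : bool => (-1) ^+ b : R)) => // x y.
by rewrite signr_addb.
Qed.

Lemma card_bvec n : #|{: bvec n}| = (2 ^ n)%N.
Proof. by rewrite card_ffun card_bool card_ord. Qed.

Lemma dotb_block k l (x a : bvec (k * l)) :
  dotb x a = \big[addb/false]_(i < k) dotb (block x i) (block a i).
Proof.
rewrite /dotb (reindex _ (onW_bij _ (blk_bij k l))) /=.
rewrite -(pair_big xpredT xpredT (fun i j => x (blk i j) && a (blk i j))) /=.
by apply: eq_bigr => i _; apply: eq_bigr => j _; rewrite !ffunE.
Qed.

Lemma chi_block k l (x a : bvec (k * l)) :
  (-1) ^+ dotb x a = \prod_(i < k) ((-1) ^+ dotb (block x i) (block a i) : R).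
Proof. by rewrite dotb_block sign_xor. Qed.

Lemma dotb0 n (x : bvec n) : dotb x (zv n) = false.
Proof. by rewrite /dotb big1 // => i _; rewrite ffunE andbF. Qed.

Lemma sum_chi n (a : bvec n) :
  \sum_(z : bvec n) ((-1) ^+ dotb z a : R) = if a == zv n then (2 ^ n)%:R else 0.
Proof.
under eq_bigr do rewrite /dotb sign_xor.
rewrite -(bigA_distr_bigA (fun i b => (-1) ^+ (b && a i) : R)) /=.
case: eqP => [->|].
  rewrite (eq_bigr (fun _ => 2%:R)); last by move=> i _; rewrite big_bool /= ffunE.
  by rewrite prodr_const card_ord natrX.
move=> an0; have [i ai] : exists i, a i.
  case: (boolP [exists i, a i]) => [/existsP //|/existsPn H].
  exfalso; apply: an0; apply/ffunP => i.
  by rewrite ffunE; apply/negbTE/H.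
rewrite (bigD1 i) //= big_bool /= ai /= expr1 expr0.
by rewrite addNr mul0r.
Qed.

End Signs.

Lemma group_sum (R : comNzRingType) k l (h : bfun l) (F : bvec k -> R)
   (G : 'I_k -> bvec l -> R) :
 \sum_(x : bvec (k * l)) F [ffun i => h (block x i)] * \prod_i G i (block x i)
 = \sum_(y : bvec k) F y * \prod_i \sum_(z | h z == y i) G i z.
Proof.
transitivity (\sum_(X : {ffun 'I_k -> bvec l}) F [ffun i => h (X i)] * \prod_i G i (X i)).
  rewrite (reindex (@unblock k l) (onW_bij _ (unblock_bij k l))) /=.
  apply: eq_bigr => X _; congr (F _ * _).
    by apply/ffunP => i; rewrite !ffunE block_unblock.
  by apply: eq_bigr => i _; rewrite block_unblock.
rewrite (partition_big (fun X : {ffun 'I_k -> bvec l} => [ffun i => h (X i)]) xpredT) //=.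
apply: eq_bigr => y _.
rewrite (bigA_distr_big_dep (fun i z => h z == y i) (fun i z => G i z)) big_distrr /=.
apply: eq_big => [X|X /eqP <-] //.
apply/eqP/familyP => [<- i|H]; first by rewrite -topredE /= ffunE.
by apply/ffunP => i; rewrite ffunE; apply/eqP; have := H i; rewrite -topredE.
Qed.

Section W.
Variable R : realType.

Lemma pow2_neq0 n : ((2 ^ n)%:R : R) != 0.
Proof. by rewrite pnatr_eq0 expn_eq0. Qed.

Lemma walshE n (f : bfun n) a :
  \sum_x ((-1) ^+ (f x (+) dotb x a) : R) = (2 ^ n)%:R * walsh R f a.
Proof.
by rewrite /walsh mulrA natrX mulfV ?mul1r // -natrX pow2_neq0.
Qed.

Definition cw n (h : bfun n) (a : bvec n) : R :=
  if a == zv n then 1 else walsh R h a.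

Lemma sum_fiber n (h : bfun n) (hb : walsh R h (zv n) = 0) (b : bool) (a : bvec n) :
  \sum_(z | h z == b) ((-1) ^+ dotb z a : R) =
    (2 ^ n)%:R / 2 * ((-1) ^+ (b && (a != zv n)) * cw h a).
Proof.
rewrite big_mkcond /=.
transitivity (\sum_z (((-1) ^+ dotb z a + (-1) ^+ b * (-1) ^+ (h z (+) dotb z a)) / 2 : R)).
  apply: eq_bigr => z _; rewrite signr_addb.
  have h2 : (2 : R) != 0 by rewrite pnatr_eq0.
  by case: (h z); case: b; case: (dotb z a) => /=;
    rewrite ?expr0 ?expr1 ?mulr1 ?mul1r ?mulrN1 ?opprK; field.
rewrite -mulr_suml /= big_split /= -mulr_sumr /= walshE sum_chi.
rewrite /cw; case: eqP => [->|an0]; rewrite ?hb ?mulr0 ?addr0 ?andbF ?andbT ?expr0 ?mul1r ?mulr1.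
  by rewrite mulrC.
by rewrite add0r; ring.
Qed.

Lemma walsh_dcomp k l (f : bfun k) (h : bfun l) (hb : walsh R h (zv l) = 0)
  (a : bvec (k * l)) :
  walsh R (Defs.dcomp f h) a =
    walsh R f [ffun i => block a i != zv l] * \prod_i cw h (block a i).
Proof.
set s := [ffun i => block a i != zv l].
apply: (mulfI (pow2_neq0 (k * l))).
rewrite -walshE /Defs.dcomp.
transitivity (\sum_(x : bvec (k * l)) ((-1) ^+ f [ffun i => h (block x i)] : R) *
   \prod_i ((-1) ^+ dotb (block x i) (block a i) : R)).
  by apply: eq_bigr => x _; rewrite signr_addb chi_block.
rewrite (group_sum h (fun y => (-1) ^+ f y) (fun i z => (-1) ^+ dotb z (block a i))).
transitivity (\sum_y ((2 ^ l)%:R / 2) ^+ k * \prod_i cw h (block a i) *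
   ((-1) ^+ (f y (+) dotb y s) : R)).
  apply: eq_bigr => y _.
  rewrite (eq_bigr _ (fun i _ => sum_fiber hb (y i) (block a i))).
  rewrite big_split /= prodr_const card_ord big_split /= signr_addb.
  have -> : \prod_i ((-1) ^+ (y i && (block a i != zv l)) : R) = (-1) ^+ dotb y s.
    by rewrite /dotb sign_xor; apply: eq_bigr => i _; rewrite ffunE.
  ring.
rewrite -mulr_sumr walshE.
have -> : ((2 ^ (k * l))%:R : R) = ((2 ^ l)%:R / 2) ^+ k * (2 ^ k)%:R.
  by rewrite [X in _ = _ * X]natrX -exprMn divfK ?pnatr_eq0 // -natrX -expnM mulnC.
ring.
Qed.
End W.

Lemma flipK n (x : bvec n) i : flip (flip x i) i = x.
Proof. by apply/ffunP => j; rewrite !ffunE; case: eqP => // _; rewrite negbK. Qed.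

Lemma flip_inj n i : injective (fun x : bvec n => flip x i).
Proof. by move=> x y H; rewrite -(flipK x i) H flipK. Qed.

Lemma blk_inj k l : injective (fun q : 'I_k * 'I_l => blk q.1 q.2).
Proof. by apply: bij_inj; apply: blk_bij. Qed.

Lemma block_flip k l (x : bvec (k * l)) i j i' :
  block (flip x (blk i j)) i' = if i' == i then flip (block x i) j else block x i'.
Proof.
apply/ffunP => j'; rewrite !ffunE.
have -> : (blk i' j' == blk i j) = (i' == i) && (j' == j).
  apply/eqP/andP => [H|[/eqP -> /eqP ->] //].
  by have /= := @blk_inj k l (i', j') (i, j) H => -[-> ->].
by case: eqP => [->|] /=; rewrite !ffunE.
Qed.

Lemma sens_dcomp k l (f : bfun k) (h : bfun l) (x : bvec (k * l)) i j :
  (Defs.dcomp f h x != Defs.dcomp f h (flip x (blk i j))) =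
  (h (block x i) != h (flip (block x i) j)) &&
  (f [ffun i' => h (block x i')] != f (flip [ffun i' => h (block x i')] i)).
Proof.
rewrite /Defs.dcomp.
case E: (h (block x i) == h (flip (block x i) j)) => /=.
  apply/negbTE; rewrite negbK; apply/eqP; congr f.
  by apply/ffunP => i'; rewrite !ffunE block_flip; case: eqP => // ->; rewrite (eqP E).
move/negbT: E => NE.
congr (_ != f _); apply/ffunP => i'; rewrite !ffunE block_flip.
case: eqP => // ->.
by move: NE; case: (h (block x i)); case: (h _).
Qed.

Section Count.
Variable R : realType.

Lemma card_sumR (T : finType) (P : pred T) :
  (#|[pred x | P x]|%:R : R) = \sum_x (P x)%:R.
Proof.
rewrite -sum1_card natr_sum big_mkcond /=.
by apply: eq_bigr => x _; rewrite inE; case: (P x).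
Qed.

Lemma fiber_card n (h : bfun n) (hb : walsh R h (zv n) = 0) b :
  \sum_(z | h z == b) (1 : R) = (2 ^ n)%:R / 2.
Proof.
have := sum_fiber hb b (zv n); rewrite eqxx andbF expr0 mul1r /cw eqxx mulr1 => <-.
by apply: eq_bigr => z _; rewrite dotb0 expr0.
Qed.

Lemma sens_count k l (f : bfun k) (h : bfun l) (hb : walsh R h (zv l) = 0) i j :
 (#|[pred x | Defs.dcomp f h x != Defs.dcomp f h (flip x (blk i j))]|%:R : R)
 = #|[pred y | f y != f (flip y i)]|%:R * #|[pred z | h z != h (flip z j)]|%:R / 2
   * ((2 ^ l)%:R / 2) ^+ k.-1.
Proof.
set F := fun y : bvec k => ((f y != f (flip y i))%:R : R).
set G := fun (i' : 'I_k) (z : bvec l) =>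
  if i' == i then ((h z != h (flip z j))%:R : R) else 1.
set N := fun b => \sum_(z | h z == b) ((h z != h (flip z j))%:R : R).
rewrite card_sumR.
transitivity (\sum_x F [ffun i' => h (block x i')] * \prod_i' G i' (block x i')).
  apply: eq_bigr => x _; rewrite sens_dcomp (bigD1 i) //= /G eqxx big1 => [|i' /negbTE -> //].
  by rewrite mulr1 /F mulrC; case: (_ != _); case: (_ != _); rewrite ?mul1r ?mul0r.
rewrite group_sum.
transitivity (\sum_y F y * N (y i) * ((2 ^ l)%:R / 2) ^+ k.-1).
  apply: eq_bigr => y _; rewrite -mulrA; congr (_ * _).
  rewrite (bigD1 i) //= /G eqxx; congr (_ * _).
  rewrite (eq_bigr (fun _ => (2 ^ l)%:R / 2)); last first.
    move=> i' /negbTE ->; exact: fiber_card.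
  by rewrite prodr_const cardC1 card_ord.
rewrite -mulr_suml; congr (_ * _).
have NS b : N b + N (~~ b) = #|[pred z | h z != h (flip z j)]|%:R.
  rewrite card_sumR (bigID (fun z => h z == b)) /=; congr (_ + _).
  by apply: eq_bigl => z; case: (h z); case: b.
have FS : \sum_y F y * N (y i) = \sum_y F y * N (~~ y i).
  rewrite (reindex_inj (@flip_inj k i)) /=; apply: eq_bigr => y _.
  rewrite /F flipK eq_sym ffunE eqxx //.
have -> : \sum_y F y * N (y i) = (\sum_y F y * N (y i) + \sum_y F y * N (~~ y i)) / 2.
  by rewrite -FS; field.
rewrite -big_split /=.
under eq_bigr do rewrite -mulrDr NS.
by rewrite -mulr_suml card_sumR [X in _ = X * _ / _]card_sumR.
Qed.

Lemma Inf_dcomp k l (f : bfun k) (h : bfun l) (hb : walsh R h (zv l) = 0) :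
  (0 < k)%N -> Inf R (Defs.dcomp f h) = Inf R f * Inf R h.
Proof.
move=> k0; rewrite /Inf (reindex _ (onW_bij _ (blk_bij k l))) /=.
rewrite -(pair_big xpredT xpredT (fun i j =>
  #|[pred x | Defs.dcomp f h x != Defs.dcomp f h (flip x (blk i j))]|%:R / (2 ^ (k * l))%:R)) /=.
rewrite mulr_suml; apply: eq_bigr => i _; rewrite mulr_sumr; apply: eq_bigr => j _.
rewrite sens_count //.
case: k k0 f i => // k' _ f i /=.
have -> : ((2 ^ (k'.+1 * l))%:R : R) = (2 ^ l)%:R ^+ k'.+1 by rewrite -natrX -expnM mulnC.
rewrite !natrX !exprS.
have t0 : ((2 : R) ^+ l) != 0 by rewrite expf_neq0 // pnatr_eq0.
have t1 : ((2 : R) ^+ k') != 0 by rewrite expf_neq0 // pnatr_eq0.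
have t2 : ((2 : R) ^+ l) ^+ k' != 0 by rewrite expf_neq0.
by rewrite expr_div_n; field; rewrite t0 t1 t2.
Qed.
End Count.

Section Fin.
Variable R : realType.

Lemma walsh_bal n (g : bfun n) : balanced g -> walsh R g (zv n) = 0.
Proof.
rewrite /balanced => bal; rewrite /walsh.
have -> : \sum_x ((-1) ^+ (g x (+) dotb x (zv n)) : R)
   = \sum_x (1 - (g x)%:R *+ 2).
  by apply: eq_bigr => x _; rewrite dotb0 addbF; case: (g x); rewrite /= ?expr1 ?expr0; lra.
rewrite sumrB sumr_const card_bvec sumrMnl -card_sumR.
have -> : ((#|[pred x | g x]|%:R : R) *+ 2) = (2 * #|[pred x | g x]|)%:R.
  by rewrite natrM mulr_natl.
by rewrite bal subrr mulr0.
Qed.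

Lemma walsh_sq_le1 n (f : bfun n) a : walsh R f a ^+ 2 <= 1.
Proof.
have : `|walsh R f a| <= 1.
  rewrite /walsh normrM.
  have -> : `|(2%:R ^- n : R)| = ((2 ^ n)%:R)^-1.
    by rewrite ger0_norm ?natrX // invr_ge0 exprn_ge0.
  rewrite ler_pdivrMl ?ltr0n ?expn_gt0 // mulr1.
  apply: le_trans (ler_norm_sum _ _ _) _.
  under eq_bigr do rewrite normr_sign.
  by rewrite sumr_const card_bvec.
rewrite ler_norml => /andP[H1 H2]; nra.
Qed.

Lemma ln2_gt0 : 0 < ln (2 : R).
Proof. by apply: ln_gt0; rewrite ltr1n. Qed.

Lemma HinfE n (f : bfun n) a0 :
  (forall a, walsh R f a ^+ 2 <= walsh R f a0 ^+ 2) ->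
  Hinf R f = if walsh R f a0 ^+ 2 == 0 then 0 else log2 (1 / walsh R f a0 ^+ 2).
Proof.
move=> Hmax; rewrite /Hinf; case: eqP => [M0|/eqP M0].
  rewrite big_pred0 // => a; apply/negbTE; rewrite negbK eq_le sqr_ge0 andbT.
  by rewrite -M0 Hmax.
have Mpos : 0 < walsh R f a0 ^+ 2 by rewrite lt0r M0 sqr_ge0.
suff -> : \big[Order.min/+oo%E]_(a | walsh R f a ^+ 2 != 0)
     (log2 (1 / walsh R f a ^+ 2))%:E = (log2 (1 / walsh R f a0 ^+ 2))%:E by [].
apply/eqP; rewrite eq_le; apply/andP; split.
  exact: (bigmin_le_cond _ (P := fun a => walsh R f a ^+ 2 != 0)).
apply/bigmin_geP; split; first exact: leey.
move=> a Ha; rewrite lee_fin /log2 ler_pM2r ?invr_gt0 ?ln2_gt0 //.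
have Wpos : 0 < walsh R f a ^+ 2 by rewrite lt0r Ha sqr_ge0.
rewrite ler_ln ?posrE ?div1r ?invr_gt0 //.
by rewrite lef_pV2 ?posrE.
Qed.
End Fin.

Section Step.
Variable R : realType.

Lemma nz_ex n (a : bvec n) : a != zv n -> exists i, a i.
Proof.
move=> an0; case: (boolP [exists i, a i]) => [/existsP //|/existsPn H].
by exfalso; move/eqP: an0; apply; apply/ffunP => i; rewrite ffunE; apply/negbTE/H.
Qed.

Lemma cw_sq_le1 n (h : bfun n) a : 0 <= cw R h a ^+ 2 <= 1.
Proof.
rewrite sqr_ge0 /cw; case: eqP => _ /=; first by rewrite expr1n lexx.
exact: walsh_sq_le1.
Qed.

Lemma step_ub k l (f : bfun k) (h : bfun l) beta ah
  (fb : walsh R f (zv k) = 0) (hb : walsh R h (zv l) = 0)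
  (fmax : forall v, walsh R f v ^+ 2 <= walsh R f beta ^+ 2)
  (hmax : forall v, walsh R h v ^+ 2 <= walsh R h ah ^+ 2) (a : bvec (k * l)) :
  walsh R (Defs.dcomp f h) a ^+ 2 <= walsh R f beta ^+ 2 * walsh R h ah ^+ 2.
Proof.
rewrite walsh_dcomp // exprMn -prodrXl.
set s := [ffun i => block a i != zv l].
case: (eqVneq s (zv k)) => [->|sn0].
  by rewrite fb expr0n /= mul0r mulr_ge0 ?sqr_ge0.
have [i0 si0] := nz_ex sn0.
apply: ler_pM; rewrite ?sqr_ge0 ?prodr_ge0 //; first by move=> i _; rewrite sqr_ge0.
rewrite (bigD1 i0) //= -[X in _ <= X]mulr1.
apply: ler_pM; rewrite ?sqr_ge0 ?prodr_ge0 //; first by move=> i _; rewrite sqr_ge0.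
  by move: si0; rewrite /cw ffunE => /negbTE ->.
by apply: prodr_ile1 => i _; exact: cw_sq_le1.
Qed.

Lemma step k l (f : bfun k) (h : bfun l) beta ah
  (fb : walsh R f (zv k) = 0) (hb : walsh R h (zv l) = 0)
  (fmax : forall v, walsh R f v ^+ 2 <= walsh R f beta ^+ 2)
  (hmax : forall v, walsh R h v ^+ 2 <= walsh R h ah ^+ 2) (wtb : wt beta = 1%N) :
  walsh R (Defs.dcomp f h) (zv (k * l)) = 0 /\ exists a, (forall v, walsh R (Defs.dcomp f h) v ^+ 2 <= walsh R (Defs.dcomp f h) a ^+ 2)
    /\ walsh R (Defs.dcomp f h) a ^+ 2 = walsh R f beta ^+ 2 * walsh R h ah ^+ 2.
Proof.
have W0 : walsh R (Defs.dcomp f h) (zv (k * l)) = 0.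
  rewrite walsh_dcomp //.
  have -> : [ffun i => block (zv (k * l)) i != zv l] = zv k.
    by apply/ffunP => i; rewrite !ffunE; apply/negbTE; rewrite negbK; apply/eqP/ffunP => j; rewrite !ffunE.
  by rewrite fb mul0r.
split => //.
have ub := step_ub fb hb fmax hmax.
case: (eqVneq (walsh R f beta ^+ 2 * walsh R h ah ^+ 2) 0) => [P0|Pn0].
  by exists (zv (k * l)); rewrite W0 expr2 mulr0; split => [v|]; rewrite ?P0 // -P0 ub.
have ahn0 : ah != zv l.
  by apply: contraNneq Pn0 => ->; rewrite hb expr0n /= mulr0.
have /card1P [ib Hib] : #|[pred i | beta i]| == 1%N by rewrite -/(wt beta) wtb.
have betaE i : beta i = (i == ib) by have := Hib i; rewrite !inE.
set al := unblock [ffun i => if i == ib then ah else zv l].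
suff E : walsh R (Defs.dcomp f h) al ^+ 2 = walsh R f beta ^+ 2 * walsh R h ah ^+ 2.
  by exists al; split => // v; rewrite E ub.
rewrite walsh_dcomp //.
have -> : [ffun i => block al i != zv l] = beta.
  apply/ffunP => i; rewrite ffunE block_unblock ffunE betaE.
  by case: (i == ib); rewrite ?ahn0 ?eqxx.
rewrite (bigD1 ib) //= big1 => [|i /negbTE ni]; last first.
  by rewrite block_unblock ffunE ni /cw eqxx.
by rewrite block_unblock ffunE eqxx /cw (negbTE ahn0) mulr1 exprMn.
Qed.
End Step.

Unset Implicit Arguments. Set Strict Implicit.

Theorem theorem5 (R : realType) (l : nat) (g : bfun l) :
  balanced g ->
  (exists beta : bvec l, wt beta = 1%N /\
     forall v : bvec l, walsh R g v ^+ 2 <= walsh R g beta ^+ 2) ->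
  forall m : nat,
    Hinf R (fiter g m) = m.+1%:R * Hinf R g /\
    Hinf R (fiter g m) / Inf R (fiter g m) =
      Hinf R g / Inf R g * (m.+1%:R / Inf R g ^+ m).
Proof.
move=> bal [beta [wtb gmax]].
have gb := walsh_bal R bal.
have l0 : (0 < l)%N.
  by have := max_card [pred i | beta i]; rewrite -/(wt beta) wtb card_ord.
set M := walsh R g beta ^+ 2.
have key : forall m, walsh R (fiter g m) (zv (nv l m)) = 0 /\
   exists a, (forall v, walsh R (fiter g m) v ^+ 2 <= walsh R (fiter g m) a ^+ 2) /\
     walsh R (fiter g m) a ^+ 2 = M ^+ m.+1.
  elim => [|m [hb [ah [hmax hE]]]]; first by split=> //; exists beta; split => //; rewrite expr1.
  have [W0 [a [amax aE]]] := step gb hb gmax hmax wtb.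
  by split => //; exists a; split => //; rewrite /= aE hE exprS.
have infE : forall m, Inf R (fiter g m) = Inf R g ^+ m.+1.
  elim => [|m IH]; first by rewrite expr1.
  have := @Inf_dcomp R _ _ g (fiter g m) (key m).1 l0.
  by rewrite exprS -IH; apply.
have M0 : 0 <= M by rewrite sqr_ge0.
have HE : forall m, Hinf R (fiter g m) = m.+1%:R * Hinf R g.
  move=> m; have [_ [a [amax aE]]] := key m.
  rewrite (HinfE amax) aE (HinfE gmax) -/M.
  case: (eqVneq M 0) => [->|Mn0]; first by rewrite expr0n /= eqxx mulr0.
  rewrite expf_eq0 (negbTE Mn0) andbF /=.
  have Mp : 0 < 1 / M by rewrite div1r invr_gt0 lt0r Mn0 M0.
  rewrite /log2.
  have -> : 1 / M ^+ m.+1 = (1 / M) ^+ m.+1 by rewrite expr_div_n expr1n.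
  by rewrite lnXn // -(mulr_natl (ln (1 / M))) mulrA.
move=> n; split; first exact: HE.
by rewrite HE infE exprS invfM; ring.
Qed.
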